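(* Let $(a_N)$ be a sequence of positive numbers and, for each $N$, let $P_{N,a_N}$ be the probability on sequences $(n_j)_{j\ge0}$ of nonnegative integers with $\sum_jn_j=N$ given by $P_{N,a_N}((n_j))\propto e^{-a_N\sum_jjn_j}$. Let $\lambda_N=1-m_N/N$ with integers $0\le m_N\le N$, and suppose $\lambda_N\to\lambda\le1$ and $(1-\lambda_N)Na_N\to\infty$. Then $$P_{N,a_N}\Big(\frac{n_0}N\ge\lambda_N\Big)=e^{-(1+\epsilon_N)A_{N1}(\lambda_N)},\qquad A_{N1}(\lambda_N)=\frac{e^{-Na_N}\big(e^{\lambda_NNa_N}-1\big)}{e^{a_N}-1},$$ where $0<\epsilon_N<-\ln\big(1-e^{-(1-\lambda_N)Na_N}\big)\to0$.
   Context: This is the canonical ensemble of $N$ noninteracting bosons in a one-dimensional harmonic trap, $n_0$ being the ground-state occupation. *)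

(* Defs.v *)
From HB Require Import structures.
From mathcomp Require Import all_boot all_order all_algebra.
From mathcomp Require Import all_classical all_reals all_analysis.
Set Implicit Arguments. Unset Strict Implicit. Unset Printing Implicit Defensive.
Import Order.TTheory GRing.Theory Num.Theory.
Import numFieldNormedType.Exports.
Local Open Scope classical_set_scope.
Local Open Scope ring_scope.

(* A configuration of the canonical ensemble is an occupation sequence
   n : nat -> nat, (n j = number of bosons in level j).  *)

Definition npart (R : realType) (n : nat -> nat) : \bar R :=
  (\esum_(j in [set: nat]) ((n j)%:R : R)%:E)%E.

Definition energy (R : realType) (n : nat -> nat) : \bar R :=
  (\esum_(j in [set: nat]) (((j * n j)%N)%:R : R)%:E)%E.

Definition configs (R : realType) (N : nat) : set (nat -> nat) :=
  [set n | npart R n = (N%:R : R)%:E].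

(* Boltzmann weight e^{-a sum_j j n_j} (energy is finite on configs) *)
Definition weight (R : realType) (a : R) (n : nat -> nat) : R :=
  expR (- a * fine (energy R n)).

Definition canon_prob (R : realType) (N : nat) (a : R) (E : set (nat -> nat)) : R :=
  fine (\esum_(n in configs R N `&` E) (weight a n)%:E)%E /
  fine (\esum_(n in configs R N) (weight a n)%:E)%E.

Definition A_N1 (R : realType) (N : nat) (a lam : R) : R :=
  expR (- (N%:R * a)) * (expR (lam * N%:R * a) - 1) / (expR a - 1).

(* Main.v *)
Require Import Defs.
From HB Require Import structures.
From mathcomp Require Import all_boot all_order all_algebra.
From mathcomp Require Import all_classical all_reals all_analysis.
From mathcomp Require Import ring lra.
Import Order.TTheory GRing.Theory Num.Theory.
Import numFieldNormedType.Exports.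
Local Open Scope classical_set_scope.
Local Open Scope ring_scope.
Set Implicit Arguments. Unset Strict Implicit. Unset Printing Implicit Defensive.

Section comb.
Variable R : realType.

Definition addk (j k : nat) (c : nat -> nat) : nat -> nat :=
  fun i => (c i + (i == j) * k)%N.
Definition unshift (c : nat -> nat) : nat -> nat :=
  fun i => if i is i'.+1 then c i' else 0%N.

Lemma esumZl (T : choiceType) (S : set T) (f : T -> \bar R) (r : R) :
  0 <= r -> (forall x, (0 <= f x)%E) ->
  (\esum_(i in S) (r%:E * f i) = r%:E * \esum_(i in S) f i)%E.
Proof.
move=> r0 f0; rewrite /esum -ereal_supZl //; last first.
  apply/set0P; exists 0%E; exists set0; first exact: fsets_set0.
  by rewrite fsbig_set0.
congr ereal_sup; apply/seteqP; split => x /=.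
  move=> [A hA <-]; exists (\sum_(i \in A) f i)%E; first by exists A.
  by rewrite ge0_mule_fsumr.
by move=> [y [A hA <-] <-]; exists A => //; rewrite ge0_mule_fsumr.
Qed.

Lemma esum_subset (T : choiceType) (S1 S2 : set T) (f : T -> \bar R) :
  S1 `<=` S2 -> (forall x, (0 <= f x)%E) ->
  (\esum_(i in S1) f i <= \esum_(i in S2) f i)%E.
Proof.
move=> sub f0; rewrite (esumID S1 S2) //; rewrite setIidr //.
by rewrite leeDl // esum_ge0.
Qed.

Lemma esum_delta (j : nat) (x : \bar R) : (0 <= x)%E ->
  (\esum_(i in [set: nat]) (if i == j then x else 0) = x)%E.
Proof.
move=> x0; rewrite (esumID [set j]); last by move=> i _; case: ifP.
rewrite setTI esum_set1 ?eqxx // esum1 ?adde0 // => i [_ /= /eqP/negbTE ->].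
by [].
Qed.

Lemma npart_addk c j k : npart R (addk j k c) = (npart R c + (k%:R)%:E)%E.
Proof.
rewrite /npart /addk; under eq_esum => i _ do rewrite natrD EFinD.
rewrite esumD //; congr (_ + _)%E.
rewrite -[in RHS](@esum_delta j (k%:R)%:E) //; apply: eq_esum => i _.
by case: eqP => _; rewrite ?mul1n ?mul0n.
Qed.

Lemma energy_addk c j k :
  energy R (addk j k c) = (energy R c + ((j * k)%N%:R)%:E)%E.
Proof.
rewrite /energy /addk; under eq_esum => i _ do rewrite mulnDr natrD EFinD.
rewrite esumD //; congr (_ + _)%E.
rewrite -[in RHS](@esum_delta j ((j*k)%N%:R)%:E) //; apply: eq_esum => i _.
by case: eqP => [->|_]; rewrite ?mul1n ?mul0n ?muln0.
Qed.

Lemma esum_shift (f : nat -> \bar R) : (forall i, 0 <= f i)%E -> f 0%N = 0%E ->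
  (\esum_(i in [set: nat]) f i = \esum_(i in [set: nat]) f i.+1)%E.
Proof.
move=> f0 f00; rewrite (esumID [set 0%N]) // setTI esum_set1 // f00 add0e.
have -> : [set: nat] `&` ~` [set 0%N] = succn @` [set: nat].
  apply/seteqP; split => x /=.
    by case: x => [[_ /(_ erefl)]|x _] //; exists x.
  by move=> [y _ <-].


by rewrite esum_image //; move=> x y _ _ [].
Qed.

Lemma npart_unshift c : npart R (unshift c) = npart R c.
Proof. by rewrite /npart esum_shift. Qed.

Lemma energy_unshift c :
  energy R (unshift c) = (energy R c + npart R c)%E.
Proof.
rewrite /energy esum_shift //=.
rewrite /npart -esumD //; apply: eq_esum => i _.
by rewrite -EFinD -natrD mulSn addnC.
Qed.

Lemma le_npart c j : (((c j)%:R)%:E <= npart R c)%E.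
Proof.
apply: esum_ge; exists [set j]; last by rewrite fsbig_set1.
by split => //; exact: finite_set1.
Qed.

Lemma npart0 : npart R (fun _ => 0%N) = 0%E.
Proof. by rewrite /npart esum1. Qed.
Lemma energy0 : energy R (fun _ => 0%N) = 0%E.
Proof. by rewrite /energy esum1 // => i _; rewrite muln0. Qed.

Lemma configs0 : configs R 0 = [set fun _ => 0%N].
Proof.
apply/seteqP; split => c /=.
  rewrite /configs /= => h; apply: funext => j.
  have := le_npart c j; rewrite h lee_fin ler_nat leqn0 => /eqP //.
by move=> ->; rewrite /configs /= npart0.
Qed.

Lemma EFin_add_eq (x : \bar R) (y k : R) : (x + k%:E = y%:E)%E -> x = (y - k)%:E.
Proof. by case: x => //= r [<-]; rewrite addrK. Qed.

Definition remk (j : nat) (n : nat -> nat) : nat -> nat :=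
  fun i => if i == j then (n i).-1 else n i.

Lemma addk_remk j n : (0 < n j)%N -> addk j 1 (remk j n) = n.
Proof.
move=> hj; apply: funext => i; rewrite /addk /remk.
by case: eqP => [->|]; rewrite ?muln1 ?addn1 ?prednK // ?muln0 ?addn0.
Qed.

Lemma configs_remk N n j : configs R N.+1 n -> (0 < n j)%N ->
  configs R N (remk j n).
Proof.
rewrite /configs /= => h hj.
move: h; rewrite -{1}(addk_remk hj) npart_addk => /EFin_add_eq ->.
by rewrite -natrB // subn1.
Qed.

Lemma configs_pos N n : configs R N.+1 n -> exists j, (0 < n j)%N.
Proof.
rewrite /configs /= => h; apply/not_existsP => hn.
have : npart R n = 0%E.
  rewrite /npart esum1 // => i _; case: (n i) (hn i) => //.
by rewrite h => -[]; apply/eqP; rewrite pnatr_eq0.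
Qed.

Lemma configs_addk N c j : configs R N c -> configs R N.+1 (addk j 1 c).
Proof. by rewrite /configs /= npart_addk => ->; rewrite -EFinD -natrD addn1. Qed.

Lemma configs_fin N n : configs R N n -> energy R n \is a fin_num.
Proof.
elim: N n => [|N IH] n.
  by rewrite configs0 => ->; rewrite energy0.
move=> h; have [j hj] := configs_pos h.
rewrite -(addk_remk hj) energy_addk fin_numD /=; apply/andP; split => //.
exact/IH/(configs_remk h).
Qed.

End comb.

Section comb2.
Variable R : realType.
Variable a : R.
Hypothesis a0 : 0 < a.

Let q := expR (- a).

Lemma weight_addk0 c k : weight a (addk 0 k c) = weight a c.
Proof. by rewrite /weight energy_addk mul0n adde0. Qed.

Lemma weight_addk N c j : configs R N c ->
  weight a (addk j 1 c) = weight a c * q ^+ j.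
Proof.
move=> hc; rewrite /weight energy_addk muln1 fineD ?(configs_fin hc) //=.
by rewrite mulrDr expRD [- a * _%:R]mulrC expRM_natl.
Qed.

Lemma weight_unshift N c : configs R N c ->
  weight a (unshift c) = weight a c * q ^+ N.
Proof.
move=> hc; rewrite /weight energy_unshift; move: (hc); rewrite /configs /= => ->.
by rewrite fineD ?(configs_fin hc) //= mulrDr expRD [- a * _%:R]mulrC expRM_natl.
Qed.

Definition Z N := (\esum_(n in configs R N) (weight a n)%:E)%E.

Lemma weight_ge0 n : (0 <= (weight a n)%:E)%E.
Proof. by rewrite lee_fin ltW // expR_gt0. Qed.

Lemma addk_inj j k : injective (addk j k).
Proof.
move=> x y h; apply: funext => i.
by have := congr1 (fun f => f i) h; rewrite /addk => /addIn.
Qed.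

Lemma unshift_inj : injective unshift.
Proof. by move=> x y h; apply: funext => i; have := congr1 (fun f => f i.+1) h. Qed.

Definition remkk (j k : nat) (n : nat -> nat) : nat -> nat :=
  fun i => if i == j then (n i - k)%N else n i.

Lemma addk_remkk j k n : (k <= n j)%N -> addk j k (remkk j k n) = n.
Proof.
move=> hj; apply: funext => i; rewrite /addk /remkk.
by case: eqP => [->|]; rewrite ?mul1n ?subnK // ?mul0n ?addn0.
Qed.

Lemma configs_remkk N k n j : configs R (N + k) n -> (k <= n j)%N ->
  configs R N (remkk j k n).
Proof.
rewrite /configs /= => h hj.
move: h; rewrite -{1}(addk_remkk hj) npart_addk => /EFin_add_eq ->.
by rewrite -natrB ?leq_addl // addnK.
Qed.

Lemma configs_addkk N c j k : configs R N c -> configs R (N + k) (addk j k c).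
Proof. by rewrite /configs /= npart_addk => ->; rewrite -EFinD -natrD. Qed.

Lemma Z_rec N : Z N.+1 = (Z N + (q ^+ N.+1)%:E * Z N.+1)%E.
Proof.
rewrite {1}/Z (esumID [set n | (0 < n 0)%N]); last by move=> *; exact: weight_ge0.
have -> : configs R N.+1 `&` [set n | (0 < n 0)%N] = addk 0 1 @` configs R N.
  apply/seteqP; split => n /=.
    move=> [hn h0]; exists (remkk 0 1 n); last exact: addk_remkk.
    by apply: configs_remkk => //; rewrite addn1.
  move=> [c hc <-]; split; first by rewrite -addn1; exact: configs_addkk.
  by rewrite /addk /= addn1.
have -> : configs R N.+1 `&` ~` [set n | (0 < n 0)%N] = unshift @` configs R N.+1.
  apply/seteqP; split => n /=.
    move=> [hn h0].
    have hu : unshift (fun i => n i.+1) = n.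
      apply: funext => -[|i] //=; move: h0; case: (n 0%N) => //.
    exists (fun i => n i.+1) => //.
    by move: hn; rewrite /configs /= -{1}hu npart_unshift.
  move=> [c hc <-]; split => //.
  by move: hc; rewrite /configs /= npart_unshift.
rewrite !esum_image; [|by move=> x y _ _; exact: unshift_inj|by move=> x y _ _; exact: addk_inj].
congr (_ + _)%E.
  by apply: eq_esum => c _; rewrite weight_addk0.
rewrite /Z -esumZl; [|by rewrite ltW // exprn_gt0 // expR_gt0|exact: weight_ge0].
by apply: eq_esum => c hc; rewrite (weight_unshift hc) EFinM muleC.
Qed.


Lemma q_gt0 : 0 < q. Proof. exact: expR_gt0. Qed.
Lemma q_lt1 : q < 1. Proof. by rewrite /q expR_lt1 oppr_lt0. Qed.

Lemma geo_sum n : (\sum_(0 <= i < n) q ^+ i) * (1 - q) = 1 - q ^+ n.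
Proof.
elim: n => [|n IH]; first by rewrite big_nil mul0r expr0 subrr.
rewrite big_nat_recr //= mulrDl IH exprS; ring.
Qed.

Lemma geo_le : (\esum_(j in [set: nat]) ((q ^+ j)%:E) <= ((1 - q)^-1)%:E)%E.
Proof.
rewrite -nneseries_esumT; last by move=> n; rewrite lee_fin ltW // exprn_gt0 // q_gt0.
apply: lime_le; first by apply: is_cvg_nneseries => n _ _; rewrite lee_fin ltW // exprn_gt0 // q_gt0.
apply: nearW => n; rewrite sumEFin lee_fin.
rewrite -[X in _ <= X]div1r ler_pdivlMr ?subr_gt0 ?q_lt1 // geo_sum.
by rewrite lerBlDr lerDl ltW // exprn_gt0 // q_gt0.
Qed.

Lemma Z_le N : (Z N.+1 <= ((1-q)^-1)%:E * Z N)%E.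
Proof.
pose jf := fun n : nat -> nat => xget 0%N [set j | (0 < n j)%N].
pose g := fun n => (remkk (jf n) 1 n, jf n).
have hj : forall n, configs R N.+1 n -> (0 < n (jf n))%N.
  move=> n hn; exact: (xgetPex 0%N (configs_pos hn)).
have -> : Z N.+1 = (\esum_(p in g @` configs R N.+1) (weight a (addk p.2 1 p.1))%:E)%E.
  rewrite esum_image.
    by apply: eq_esum => n hn /=; rewrite addk_remkk // hj.
  move=> x y hx hy h.
  move: hx hy; rewrite !inE => hx hy.
  have := congr1 (fun p => addk p.2 1 p.1) h; rewrite /= !addk_remkk //; exact: hj.
apply: (@le_trans _ _ (\esum_(p in configs R N `*`` (fun _ => [set: nat]))
    (weight a (addk p.2 1 p.1))%:E)%E).
  apply: esum_subset; last by move=> *; exact: weight_ge0.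
  move=> p [n hn <-]; split => //=.
  by apply: configs_remkk; rewrite ?addn1 // hj.
rewrite -(@esum_esum R _ _ (configs R N) (fun _ => [set: nat]) (fun c j => (weight a (addk j 1 c))%:E)); last by move=> *; exact: weight_ge0.
apply: (@le_trans _ _ (\esum_(c in configs R N) ((weight a c)%:E * ((1-q)^-1)%:E))%E).
  apply: le_esum => c hc.
  under eq_esum => j _ do rewrite (weight_addk j hc) EFinM.
  rewrite esumZl; last by move=> j; rewrite lee_fin ltW // exprn_gt0 // q_gt0.
    by apply: lee_wpmul2l; [exact: weight_ge0|exact: geo_le].
  by apply: ltW; apply: expR_gt0.
under eq_esum do rewrite muleC.
rewrite esumZl //; last by move=> *; exact: weight_ge0.
by rewrite invr_ge0 subr_ge0 ltW // q_lt1.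
Qed.

Lemma Z0 : Z 0 = 1%E.
Proof.
by rewrite /Z configs0 esum_set1 ?weight_ge0 // /weight energy0 /= mulr0 expR0.
Qed.

Lemma Z_ge1 N : (1 <= Z N)%E.
Proof.
elim: N => [|N IH]; first by rewrite Z0.
rewrite Z_rec; apply: (le_trans IH); rewrite leeDl // mule_ge0 //.
  by rewrite lee_fin ltW // exprn_gt0 // q_gt0.
by apply: esum_ge0 => *; exact: weight_ge0.
Qed.

Lemma Z_fin N : Z N \is a fin_num.
Proof.
have Zge0 : forall N, (0 <= Z N)%E by move=> M; apply: le_trans (Z_ge1 M).
rewrite ge0_fin_numE //; apply: (@le_lt_trans _ _ ((((1-q)^-1) ^+ N)%:E)); last exact: ltry.
elim: N => [|N IH]; first by rewrite Z0 expr0.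
apply: (le_trans (Z_le N)); rewrite exprS EFinM lee_wpmul2l //.
by rewrite lee_fin invr_ge0 subr_ge0 ltW // q_lt1.
Qed.

Definition z N := fine (Z N).

Lemma ZE N : Z N = (z N)%:E.
Proof. by rewrite /z fineK // Z_fin. Qed.

Lemma z_ge1 N : 1 <= z N.
Proof. by have := Z_ge1 N; rewrite ZE lee_fin. Qed.

Lemma z_rec N : z N.+1 * (1 - q ^+ N.+1) = z N.
Proof.
have := Z_rec N; rewrite !ZE -EFinM -EFinD => -[h].
by rewrite mulrBr mulr1 {1}h; ring.
Qed.

Lemma cond_eq (N m x : nat) : (0 < N)%N -> (m <= N)%N ->
  (1 - m%:R / N%:R <= x%:R / N%:R :> R) = (N - m <= x)%N.
Proof.
move=> N0 mN.
rewrite -(@ler_pM2r _ N%:R) ?ltr0n // mulrBl mul1r !divfK ?pnatr_eq0 -?lt0n //.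
by rewrite -natrB // ler_nat.
Qed.

Lemma event_eq N m : (0 < N)%N -> (m <= N)%N ->
  configs R N `&` [set n | 1 - m%:R / N%:R <= (n 0%N)%:R / N%:R :> R] =
  addk 0 (N - m) @` configs R m.
Proof.
move=> N0 mN; apply/seteqP; split => n /=.
  rewrite cond_eq // => -[hn h0]; exists (remkk 0 (N - m) n).
    by apply: configs_remkk => //; rewrite subnKC.
  exact: addk_remkk.
move=> [c hc <-]; split.
  by have := configs_addkk 0 (N - m) hc; rewrite subnKC.
by rewrite cond_eq // /addk /= mul1n leq_addl.
Qed.

Lemma canon_prob_eq N m : (0 < N)%N -> (m <= N)%N ->
  canon_prob N a [set n | 1 - m%:R / N%:R <= (n 0%N)%:R / N%:R :> R] = z m / z N.
Proof.
move=> N0 mN; rewrite /canon_prob event_eq // esum_image.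
  by rewrite /z /Z; congr (fine _ / _); apply: eq_esum => c _; rewrite weight_addk0.
by move=> x y _ _; exact: addk_inj.
Qed.

End comb2.

Section ana.
Variable R : realType.

Lemma ln1m_gt (x : R) : 0 < x < 1 -> x < - ln (1 - x).
Proof.
move=> /andP[x0 x1]; rewrite ltrNr -ltr_expR lnK ?posrE ?subr_gt0 //.
by have := @expR_gt1Dx _ (- x); rewrite oppr_eq0 gt_eqF // => /(_ isT).
Qed.

Lemma ln1m_chord (x z : R) : 0 < x -> x <= z -> z < 1 ->
  - ln (1 - x) <= x * (- ln (1 - z) / z).
Proof.
move=> x0 xz z1; have z0 : 0 < z by apply: lt_le_trans xz.
have t0 : 0 <= x / z by rewrite divr_ge0 // ltW.
have t1 : x / z <= 1 by rewrite ler_pdivrMr // mul1r.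
have := @concave_ln R (Itv01 t0 t1) (1 - z) 1.
rewrite subr_gt0 z1 ltr01 => /(_ isT isT).
rewrite !convRE /= ln1 mulr0 addr0 /unstable.onem.
have -> : x / z * (1 - z) + (1 - x / z) * 1 = 1 - x by field; rewrite gt_eqF.
move=> h; have e : x * (- ln (1 - z) / z) = - (x / z * ln (1 - z)) by ring.
by rewrite e lerN2.
Qed.

Lemma K_lt (z : R) : 0 < z < 1 -> - ln (1 - z) / z < 1 + - ln (1 - z).
Proof.
move=> /andP[z0 z1]; set y := 1 - z.
have y0 : 0 < y by rewrite subr_gt0.
have h1 : - ln y < y^-1 - 1.
  rewrite -lnV ?posrE // -ltr_expR lnK ?posrE ?invr_gt0 //.
  have := @expR_gt1Dx _ (y^-1 - 1); rewrite subr_eq0 addrC subrK; apply.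

  rewrite invr_eq1; apply/negP => /eqP h; move: z0; rewrite /y in h; lra.
have h2 : - ln y * y < 1 - y.
  by rewrite -(ltr_pM2r y0) mulrBl mulVf ?gt_eqF // mul1r in h1.
rewrite ltr_pdivrMr // mulrDl mul1r.
have -> : z = 1 - y by rewrite /y opprB addrC subrK.
lra.
Qed.

End ana.

Section ana2.
Variable R : realType.
Variable a : R.
Hypothesis a0 : 0 < a.
Let q := expR (- a).

Lemma z_ratio m N : (m <= N)%N ->
  z a m / z a N = expR (- \sum_(m <= k < N) - ln (1 - q ^+ k.+1)).
Proof.
elim: N => [|N IH].
  rewrite leqn0 => /eqP ->; rewrite big_geq // oppr0 expR0 divff //.
  by apply: lt0r_neq0; apply: lt_le_trans (z_ge1 _ _).
rewrite leq_eqVlt => /orP[/eqP ->|]; first rewrite big_geq // oppr0 expR0 divff //.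
  by apply: lt0r_neq0; apply: lt_le_trans (z_ge1 _ _).
rewrite ltnS => mN; rewrite big_nat_recr //= opprD opprK expRD -IH //.
have hq : 0 < 1 - q ^+ N.+1.
  by rewrite subr_gt0 exprn_ilt1 // ?ltW ?q_gt0 // q_lt1.
rewrite lnK ?posrE // -(z_rec a0 N).
have zN : z a N.+1 != 0 by apply: lt0r_neq0; apply: lt_le_trans (z_ge1 _ _).
by field; rewrite zN gt_eqF.
Qed.


Lemma geo2 m N : (m <= N)%N ->
  (\sum_(m <= k < N) q ^+ k.+1) * (1 - q) = q ^+ m.+1 - q ^+ N.+1.
Proof.
elim: N => [|N IH]; first by rewrite leqn0 => /eqP ->; rewrite big_geq // mul0r subrr.
rewrite leq_eqVlt => /orP[/eqP ->|]; first by rewrite big_geq // mul0r subrr.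
rewrite ltnS => mN; rewrite big_nat_recr //= mulrDl IH // !exprS; ring.
Qed.

Lemma A_eq m N : (0 < N)%N -> (m <= N)%N ->
  A_N1 N a (1 - m%:R / N%:R) = \sum_(m <= k < N) q ^+ k.+1.
Proof.
move=> N0 mN; rewrite /A_N1.
have -> : (1 - m%:R / N%:R) * N%:R * a = (N - m)%N%:R * a.
  by rewrite mulrBl mul1r divfK ?pnatr_eq0 -?lt0n // natrB.
set e := expR a.
have he : e = q^-1 by rewrite /q expRN invrK.
have q0 : 0 < q by exact: q_gt0.
have q1 : q < 1 by exact: q_lt1.
rewrite expRM_natl -/e -mulrN expRM_natl -/q.
have hqe : q ^+ N * e ^+ (N - m) = q ^+ m.
  by rewrite -{1}(subnKC mN) exprD -mulrA -exprMn he mulfV ?gt_eqF // expr1n mulr1.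
have hS : \sum_(m <= k < N) q ^+ k.+1 = (q ^+ m.+1 - q ^+ N.+1) / (1 - q).
  by rewrite -geo2 // mulfK // subr_eq0 gt_eqF.
rewrite hS mulrBr hqe mulr1 he !exprS.
by field; apply/andP; split; apply: lt0r_neq0; rewrite // subr_gt0.
Qed.

End ana2.

Unset Implicit Arguments. Set Strict Implicit.

Theorem proposition4 (R : realType) (a : nat -> R) (m : nat -> nat) (lam : R) :
  (forall N, 0 < a N) ->
  (forall N, (m N <= N)%N) ->
  let lamN := fun N : nat => 1 - (m N)%:R / N%:R in
  lamN @ \oo --> lam ->
  lam <= 1 ->
  (fun N : nat => (1 - lamN N) * N%:R * a N) @ \oo --> +oo ->
  exists eps : nat -> R,
    (\forall N \near \oo,
       canon_prob N (a N) [set n | lamN N <= (n 0%N)%:R / N%:R] =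
         expR (- ((1 + eps N) * A_N1 N (a N) (lamN N))) /\
       0 < eps N /\
       eps N < - ln (1 - expR (- ((1 - lamN N) * N%:R * a N)))) /\
    (fun N : nat => - ln (1 - expR (- ((1 - lamN N) * N%:R * a N)))) @ \oo --> 0.
Proof.
move=> ha hm lamN hlam hl1 hinf.
pose X := fun N : nat => (1 - lamN N) * N%:R * a N.
have hpos : \forall N \near \oo, 0 < X N by exact: (cvgry_gt hinf 0).
have hXN : forall N, 0 < X N -> [/\ (0 < N)%N, (0 < m N)%N & X N = (m N)%:R * a N].
  move=> N; rewrite /X /lamN; case: N => [|N]; first by rewrite mulr0 mul0r ltxx.
  have -> : (1 - (1 - (m N.+1)%:R / N.+1%:R)) * N.+1%:R = (m N.+1)%:R :> R.
    by rewrite opprB addrC subrK divfK // pnatr_eq0.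
  case: (m N.+1) => [|k]; first by rewrite mul0r ltxx.
  by [].
pose q N := expR (- a N).
pose s N := \sum_(m N <= k < N) - ln (1 - q N ^+ k.+1).
pose Aq N := \sum_(m N <= k < N) q N ^+ k.+1.
pose c N := - ln (1 - expR (- X N)).
exists (fun N => if (m N < N)%N then s N / Aq N - 1 else c N / 2).
split.
  near=> N.
  have hX : 0 < X N by near: N.
  have [N0 m0 eX] := hXN N hX.
  have q0 : 0 < q N by exact: expR_gt0.
  have q1 : q N < 1 by rewrite expR_lt1 oppr_lt0.
  have qk0 : forall k, 0 < q N ^+ k by move=> k; exact: exprn_gt0.
  have qk1 : forall k, (0 < k)%N -> q N ^+ k < 1.
    by move=> k k0; rewrite exprn_ilt1 ?ltW // -lt0n.
  have hz : expR (- X N) = q N ^+ m N by rewrite eX -mulrN expRM_natl.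
  have cE : c N = - ln (1 - q N ^+ m N) by rewrite /c hz.
  have c0 : 0 < c N.
    rewrite cE; apply: lt_trans (ln1m_gt _); first exact: qk0.
    by rewrite qk0 qk1.
  rewrite /lamN canon_prob_eq ?hm // (z_ratio (ha N)) ?hm // (A_eq (ha N)) ?hm //.
  rewrite -/(X N) -/(c N) -/(q N) -/(s N) -/(Aq N).
  case: ltnP => [mN|Nm].
    have A0 : 0 < Aq N.
      rewrite /Aq big_ltn //; have := qk0 (m N).+1.
      have : 0 <= \sum_((m N).+1 <= k < N) q N ^+ k.+1 by apply: sumr_ge0 => *; exact: ltW.
      lra.
    have hsA : Aq N < s N.
      rewrite /Aq /s; apply: ltr_sum.
        by apply/hasP; exists (m N) => //; rewrite mem_index_iota leqnn.
      by move=> i _; apply: ln1m_gt; rewrite qk0 qk1.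
    set K := - ln (1 - q N ^+ m N) / q N ^+ m N.
    have hsK : s N <= K * Aq N.
      rewrite /s /Aq mulr_sumr; apply: ler_sum_nat => i /andP[mi iN].
      rewrite mulrC; apply: ln1m_chord => //; last exact: qk1.
      by apply: ler_wiXn2l; rewrite ?ltW // ltnW.
    have hK : K < 1 + c N by rewrite cE; apply: K_lt; rewrite qk0 qk1.
    split; first by rewrite addrC subrK divfK // gt_eqF.
    split; first by rewrite subr_gt0 ltr_pdivlMr // mul1r.
    rewrite ltrBlDl ltr_pdivrMr //; apply: (le_lt_trans hsK).
    by rewrite ltr_pM2r.
  have mN : m N = N by apply/eqP; rewrite eqn_leq hm Nm.
  rewrite /s /Aq mN !big_geq // mulr0 oppr0.
  by split => //; split; [rewrite divr_gt0 | rewrite ltr_pdivrMr // ltr_pMr //; lra].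
have h1 : (fun N => expR (- X N)) @ \oo --> 0 := cvg_comp _ _ hinf (@cvgr_expR R).
have h2 : (fun N => 1 - expR (- X N)) @ \oo --> (1 : R).
  by rewrite -[X in _ --> X]subr0; apply: cvgB; [exact: cvg_cst|exact: h1].

have h3 := cvg_comp _ _ h2 (continuous_ln ltr01).
have h4 : (fun N => - ln (1 - expR (- X N))) @ \oo --> - ln (1:R) by apply: cvgN.
move: h4; rewrite ln1 oppr0; exact.
Unshelve. all: by end_near.
Qed.
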